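(* The closure of the set of periodic points of $\Phi_{\mathrm{Id}}\colon\mathrm{M}\mapsto\mathrm{M}^2$ on $\mathcal{M}(2;\mathbb{C})$ is $\{\mathbf{0}\}\cup\Lambda^0\cup\Lambda^1\cup\Lambda^2$, where $\Lambda^0=\{\mathrm{M}:\det\mathrm{M}=0,\ |\mathrm{tr}\,\mathrm{M}|=1\}$, $\Lambda^1=\{\mathrm{M}:(\mathrm{tr}\,\mathrm{M})^2-4\det\mathrm{M}=0,\ |\det\mathrm{M}|=1\}$, $\Lambda^2=\{\mathrm{M}:\frac{(\mathrm{tr}\,\mathrm{M})^2}{\det\mathrm{M}}\in[0,4[,\ |\det\mathrm{M}|=1\}$.
   Context: $\mathbf{0}$ is the zero matrix. A point is periodic if $\Phi_{\mathrm{Id}}^k(\mathrm{M})=\mathrm{M}$ for some $k\geq1$. ($\Lambda^0$: one eigenvalue of modulus $1$ and the other zero; $\Lambda^1$: a double eigenvalue of modulus $1$; $\Lambda^2$: two distinct eigenvalues of modulus $1$.) *)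

(* Defs.v *)
(* The complex field is modelled as
   R[i] (real-closed `complex`) over an arbitrary R : realType; the alias
   R[i]^o equips it with its normed (hence topological) structure, and
   'M[R[i]^o]_2 carries the (product = usual) topology. *)
From mathcomp Require Import all_boot all_algebra.
From mathcomp Require Import all_classical all_reals all_analysis.
From mathcomp.real_closed Require Import complex.
Import GRing.Theory Num.Theory numFieldNormedType.Exports.
Unset Printing Implicit Defensive.
Local Open Scope ring_scope.
Local Open Scope classical_set_scope.

Definition Phi_Id (R : realType) (M : 'M[R[i]^o]_2) : 'M[R[i]^o]_2 := M ^+ 2.

Definition periodic_pts (R : realType) : set 'M[R[i]^o]_2 :=
  [set M | exists k : nat, (1 <= k)%N /\ iter k (@Phi_Id R) M = M].

Definition Lambda0 (R : realType) : set 'M[R[i]^o]_2 :=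
  [set M | \det M = 0 /\ `|\tr M| = 1].

Definition Lambda1 (R : realType) : set 'M[R[i]^o]_2 :=
  [set M | (\tr M) ^+ 2 - 4 * \det M = 0 /\ `|\det M| = 1].

(* Lambda^2 = { (tr M)^2 / det M in [0,4[ (a real number), |det M| = 1 }.
   In R[i], 0 <= z < 4 means z is real with 0 <= z < 4. *)
Definition Lambda2 (R : realType) : set 'M[R[i]^o]_2 :=
  [set M | 0 <= (\tr M) ^+ 2 / \det M < 4 /\ `|\det M| = 1].

(* Main.v *)
Require Import Defs.
From mathcomp Require Import all_boot all_algebra.
From mathcomp Require Import all_classical all_reals all_analysis.
From mathcomp.real_closed Require Import complex.
From mathcomp Require Import ring lra.
Import GRing.Theory Num.Theory numFieldNormedType.Exports.
Import order.Order.TTheory.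
Local Open Scope ring_scope.
Local Open Scope classical_set_scope.
Section Alg.
Variable R : realType.
Local Notation C := (R[i]^o).
Local Notation i0 := (ord0 : 'I_2).
Local Notation i1 := (lift ord0 ord0 : 'I_2).

Lemma tr2 (M : 'M[C]_2) : \tr M = M i0 i0 + M i1 i1.
Proof. by rewrite /mxtrace big_ord_recl big_ord1. Qed.
Lemma det2 (M : 'M[C]_2) : \det M = M i0 i0 * M i1 i1 - M i0 i1 * M i1 i0.
Proof.
rewrite (expand_det_row _ ord0) big_ord_recl big_ord1 /cofactor !det_mx11 /=.
rewrite !mxE /=.
have -> : (lift ord0 0 : 'I_2) = i1 by apply: val_inj.
have -> : (lift i1 0 : 'I_2) = i0 by apply: val_inj.
rewrite /= expr0 expr1 !mul1r mulN1r mulrN. done.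
Qed.
Lemma ord2P (i : 'I_2) : i = i0 \/ i = i1.
Proof. case: i => [[|[|n]] Hn]; [left|right|]; try by apply: val_inj. by []. Qed.

Lemma CH2 (M : 'M[C]_2) : M ^+ 2 = \tr M *: M - (\det M)%:M.
Proof.
apply/matrixP => i j; rewrite expr2 !mxE big_ord_recl big_ord1 tr2 det2 /=.
case: (ord2P i) => ->; case: (ord2P j) => ->; rewrite /= ?mxE /= ?mulr1n ?mulr0n; ring.
Qed.

Lemma iterPhi (M : 'M[C]_2) k : iter k (@Phi_Id R) M = M ^+ (2 ^ k).
Proof.
elim: k => [|k IH]; first by rewrite expr1.
by rewrite iterS IH /Phi_Id -exprM expnSr.
Qed.

Lemma powrec (M : 'M[C]_2) m :
  M ^+ m.+2 = \tr M *: M ^+ m.+1 - \det M *: M ^+ m.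
Proof.
have -> : M ^+ m.+2 = M ^+ m * M ^+ 2 by rewrite -exprD addn2.
rewrite CH2 mulrBr -scalerAr -exprSr.
by rewrite -mulmxE mul_mx_scalar.
Qed.

Lemma detX2 (M : 'M[C]_2) m : \det (M ^+ m) = \det M ^+ m.
Proof.
elim: m => [|m IH]; first by rewrite !expr0 det1.
by rewrite !exprS -mulmxE det_mulmx IH.
Qed.

Lemma trX2 (M : 'M[C]_2) (l u : C) : l + u = \tr M -> l * u = \det M ->
  forall m, \tr (M ^+ m) = l ^+ m + u ^+ m.
Proof.
move=> Ht Hd.
suff H : forall m, \tr (M ^+ m) = l ^+ m + u ^+ m /\ \tr (M ^+ m.+1) = l ^+ m.+1 + u ^+ m.+1.
  by move=> m; case: (H m).
elim=> [|m [IH1 IH2]].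
  by rewrite !expr0 !expr1 mxtrace1 Ht.
split => //.
rewrite powrec raddfB /= !mxtraceZ IH1 IH2 -Ht -Hd !exprS; ring.
Qed.

Lemma roots2 (p q : C) : exists l u : C, l + u = p /\ l * u = q.
Proof.
set s := sqrtC (p ^+ 2 - 4 * q).
exists ((p + s) / 2), ((p - s) / 2); split; first by field.
have Hs : s ^+ 2 = p ^+ 2 - 4 * q by rewrite sqrtCK.
transitivity ((p ^+ 2 - s ^+ 2) / 4); first by field.
by rewrite Hs; field.
Qed.

Lemma parallelogram (x y : C) :
  `|x + y| ^+ 2 + `|x - y| ^+ 2 = 2 * `|x| ^+ 2 + 2 * `|y| ^+ 2.
Proof. rewrite !normCK rmorphD rmorphB /=. ring. Qed.

Lemma pow_fix_norm (x : C) m : (1 < m)%N -> x ^+ m = x -> x = 0 \/ `|x| = 1.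
Proof.
move=> m1 Hx; have [->|x0] := eqVneq x 0; first by left.
right; have H1 : x ^+ m.-1 = 1.
  apply: (mulfI x0); rewrite mulr1 -exprS prednK ?Hx //; exact: ltnW.
have : `|x| ^+ m.-1 == 1 by rewrite -normrX H1 normr1.
by rewrite pexpr_eq1 ?normr_ge0 ?(@ltn_predRL 0) // => /eqP.
Qed.

Definition Sp : set 'M[C]_2 :=
  [set M | M = 0] `|` [set M | \det M = 0 /\ `|\tr M| = 1] `|`
  [set M | `|\det M| = 1 /\ `|\tr M| ^+ 2 + `|\tr M ^+ 2 - 4 * \det M| = 4].

Lemma sym2 (x y a b : C) : x + y = a + b -> x * y = a * b ->
  (x = a /\ y = b) \/ (x = b /\ y = a).
Proof.
move=> Hs Hp.
have : (x - a) * (x - b) = 0.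
  have -> : (x - a) * (x - b) = x * x - (a + b) * x + a * b by ring.
  by rewrite -Hs -Hp; ring.
move/eqP; rewrite mulf_eq0 => /orP [] /eqP /subr0_eq Hx.
  by left; split => //; apply/(addrI x); rewrite Hs Hx.
by right; split => //; apply/(addrI x); rewrite Hs Hx addrC.
Qed.

Arguments sym2 [x y a b].

Lemma per_Sp (M : 'M[C]_2) : periodic_pts R M -> Sp M.
Proof.
move=> [k [k1 HM]]; rewrite iterPhi in HM.
set N := (2 ^ k)%N in HM.
have N1 : (1 < N)%N by rewrite /N -{1}(expn0 2) ltn_exp2l.
have [l [u [Ht Hd]]] := roots2 (\tr M) (\det M).
have Htr : l ^+ N + u ^+ N = l + u by rewrite -(@trX2 M l u Ht Hd N) HM Ht.
have Hdt : l ^+ N * u ^+ N = l * u by rewrite -exprMn Hd -detX2 HM.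
have Hlu : l ^+ (N * N) = l /\ u ^+ (N * N) = u.
  rewrite !exprM; case: (sym2 Htr Hdt) => [[E1 E2]|[E1 E2]].
    by rewrite E1 E2 E1 E2.
  by rewrite E1 E2.
have NN1 : (1 < N * N)%N by rewrite (@ltn_mul 1 1).
have [l0|l1] := @pow_fix_norm l _ NN1 Hlu.1; have [u0|u1] := @pow_fix_norm u _ NN1 Hlu.2.
- left; left => /=.
  have M2 : M ^+ 2 = 0.
    by rewrite CH2 -Ht -Hd l0 u0 add0r mul0r scale0r raddf0 subr0.
  rewrite -HM -(subnK N1) exprD M2 mulr0 //.
- left; right; split; first by rewrite -Hd l0 mul0r.
  by rewrite -Ht l0 add0r.
- left; right; split; first by rewrite -Hd u0 mulr0.
  by rewrite -Ht u0 addr0.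
- right; split; first by rewrite -Hd normrM l1 u1 mulr1.
  have -> : \tr M ^+ 2 - 4 * \det M = (l - u) ^+ 2 by rewrite -Ht -Hd; ring.
  rewrite normrX -Ht parallelogram l1 u1; ring.
Qed.

Definition ctf (f : 'M[C]_2 -> C) := continuous f.

Lemma ctfD f g : ctf f -> ctf g -> ctf (fun M => f M + g M).
Proof. by move=> hf hg x; exact: (continuousD (hf x) (hg x)). Qed.
Lemma ctfM f g : ctf f -> ctf g -> ctf (fun M => f M * g M).
Proof. by move=> hf hg x; exact: (continuousM (hf x) (hg x)). Qed.
Lemma ctfN f : ctf f -> ctf (fun M => - f M).
Proof. by move=> hf x; exact: (continuousN (hf x)). Qed.
Lemma ctfB f g : ctf f -> ctf g -> ctf (fun M => f M - g M).
Proof. by move=> hf hg; apply: ctfD => //; apply: ctfN. Qed.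
Lemma ctfC c : ctf (fun _ => c).
Proof. by move=> x; apply: cst_continuous. Qed.
Lemma ctfE i j : ctf (fun M => M i j).
Proof. exact: coord_continuous. Qed.
Lemma ctf_norm f : ctf f -> ctf (fun M => `|f M|).
Proof. by move=> hf x; apply: (continuous_comp (hf x)); apply: norm_continuous. Qed.
Lemma ctfX2 f : ctf f -> ctf (fun M => f M ^+ 2).
Proof.
move=> hf; rewrite (_ : (fun M => f M ^+ 2) = (fun M => f M * f M)).
  exact: ctfM.
by apply: funext => M; rewrite expr2.
Qed.
Lemma ctf_tr : ctf (fun M => \tr M).
Proof.
rewrite (_ : (fun M => \tr M) = (fun M => M i0 i0 + M i1 i1)).
  by apply: ctfD; apply: ctfE.
by apply: funext => M; rewrite tr2.
Qed.
Lemma ctf_det : ctf (fun M => \det M).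
Proof.
rewrite (_ : (fun M => \det M) = (fun M => M i0 i0 * M i1 i1 - M i0 i1 * M i1 i0)).
  by apply: ctfB; apply: ctfM; apply: ctfE.
by apply: funext => M; rewrite det2.
Qed.

Lemma closed_level f c : ctf f -> closed [set M | f M = c].
Proof.
move=> hf.
have -> : [set M | f M = c] = f @^-1` [set c] by [].
apply: preimage_closed; first by move=> x _; apply: hf.
apply: accessible_closed_set1; apply: hausdorff_accessible; exact: norm_hausdorff.
Qed.

Lemma Sp_closed : closed Sp.
Proof.
apply: closedU; first apply: closedU.
- apply: accessible_closed_set1; apply: hausdorff_accessible; exact: norm_hausdorff.
- apply: closedI; first exact: closed_level ctf_det.
  apply: (@closed_level (fun M => `|\tr M|) 1). exact (@ctf_norm _ ctf_tr).
- apply: closedI; first by apply: (@closed_level (fun M => `|\det M|) 1); exact (@ctf_norm _ ctf_det).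
  apply: (@closed_level (fun M => `|\tr M| ^+ 2 + `|\tr M ^+ 2 - 4 * \det M|) 4).
  exact (@ctfD _ _ (@ctfX2 _ (@ctf_norm _ ctf_tr))
    (@ctf_norm _ (@ctfB _ _ (@ctfX2 _ ctf_tr) (@ctfM _ _ (ctfC 4) ctf_det)))).
Qed.

Lemma norm4 : `|4 : C| = 4.
Proof. by rewrite ger0_norm // ler0n. Qed.

Lemma RHS_Sp :
  [set (0 : 'M[C]_2)] `|` Lambda0 R `|` Lambda1 R `|` Lambda2 R = Sp.
Proof.
apply/seteqP; split => M.
- case=> [[[->|H0]|[H1 Hd]]|[/andP [z0 z4] Hd]].
  + by left; left.
  + by left; right.
  + right; split => //.
    move/subr0_eq: H1 => H1.
    by rewrite -normrX H1 subrr normr0 addr0 normrM Hd norm4 mulr1.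
  + right; split => //.
    set z := \tr M ^+ 2 / \det M in z0 z4.
    have d0 : \det M != 0 by rewrite -normr_eq0 Hd oner_eq0.
    have Et : \tr M ^+ 2 = z * \det M by rewrite /z divfK.
    clearbody z.
    rewrite -normrX Et -{2}(mul1r (\det M)) -[4]mulr1 -mulrA mul1r -mulrBl.
    rewrite !normrM Hd !mulr1 (ger0_norm z0) ler0_norm; last by rewrite subr_le0 ltW.
    by rewrite opprB addrC subrK.
- case=> [[->|H0]|[Hd Heq]].
  + by left; left; left.
  + by left; left; right.
  + set z := \tr M ^+ 2 / \det M.
    have d0 : \det M != 0 by rewrite -normr_eq0 Hd oner_eq0.
    have Et : \tr M ^+ 2 = z * \det M by rewrite /z divfK.
    have Ez0 : \tr M ^+ 2 / \det M = z by [].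
    clearbody z.
    have Hz : `|z + (4 - z)| = `|z| + `|4 - z|.
      rewrite addrC subrK norm4 -{1}Heq -normrX Et.
      have -> : z * \det M - 4 * \det M = - ((4 - z) * \det M) by ring.
      by rewrite normrN !normrM Hd !mulr1.
    have [k k1 [Ez Ez4]] := normCDeq Hz.
    have k_1 : k = 1.
      move: Hz; rewrite addrC subrK norm4 => Hz.
      apply: (mulfI (_ : (4 : C) != 0)); first by rewrite pnatr_eq0.
      by rewrite mulr1 {1}Hz mulrDl -Ez -Ez4 addrC subrK.
    rewrite k_1 mulr1 in Ez Ez4.
    have z0 : 0 <= z by rewrite Ez normr_ge0.
    have z4 : z <= 4 by rewrite -subr_ge0 Ez4 mulr_ge0 ?normr_ge0 ?ler01.
    have [ez4|nz4] := eqVneq z 4.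
      left; right; split => //.
      by rewrite Et ez4 subrr.
    right; split => //.
    by rewrite Ez0 z0 lt_neqAle nz4 z4.
Qed.

Lemma powform (P : 'M[C]_2) (a b : C) : \tr P = a + b -> \det P = a * b ->
  forall m, (a - b) *: P ^+ m.+1 =
     (a ^+ m.+1 - b ^+ m.+1) *: P - (a * b * (a ^+ m - b ^+ m)) *: 1.
Proof.
move=> Ht Hd; elim=> [|m IH].
  by rewrite expr1 !expr0 expr1 subrr mulr0 scale0r subr0.
rewrite exprSr scalerAl IH mulrBl -scalerAl -expr2 CH2 Ht Hd.
rewrite -scalerAl mul1r -scalemx1 scalerBr !scalerA addrAC -scalerBl.
congr (_ *: _ - _ *: _); rewrite !exprS; ring.
Qed.

Lemma per_of (P : 'M[C]_2) (a b : C) k : (0 < k)%N ->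
  \tr P = a + b -> \det P = a * b -> a != b ->
  a ^+ (2 ^ k) = a -> b ^+ (2 ^ k) = b -> periodic_pts R P.
Proof.
move=> k0 Ht Hd ab Ha Hb; exists k; split => //; rewrite iterPhi.
have kN : (2 ^ k)%N = (2 ^ k).-1.+1 by rewrite prednK ?expn_gt0.
rewrite kN in Ha Hb *; set m := (2 ^ k).-1 in Ha Hb *.
apply: (scalerI (_ : a - b != 0)); first by rewrite subr_eq0.
rewrite powform // Ha Hb.
have -> : a * b * (a ^+ m - b ^+ m) = b * a ^+ m.+1 - a * b ^+ m.+1 by rewrite !exprS; ring.
by rewrite Ha Hb mulrC subrr scale0r subr0.
Qed.
End Alg.
Section Trig.
Variable R : realType.
Local Notation C := (R[i]^o).
Definition cis (x : R) : C := Complex (cos x) (sin x).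
Definition nm (z : C) : R := Num.sqrt (complex.Re z ^+ 2 + complex.Im z ^+ 2).

Lemma normE (z : C) : `|z| = ((nm z)%:C)%C.
Proof. by case: z. Qed.

Lemma nm_ge0 z : 0 <= nm z.
Proof. exact: sqrtr_ge0. Qed.

Lemma nmD x y : nm (x + y) <= nm x + nm y.
Proof. by rewrite -lecR rmorphD /= -!normE ler_normD. Qed.

Lemma nmM x y : nm (x * y) = nm x * nm y.
Proof. by apply: complexI; rewrite rmorphM /= -!normE normrM. Qed.

Lemma nmC x y : nm (x - y) = nm (y - x).
Proof. by apply: complexI; rewrite -!normE distrC. Qed.

Lemma nm_eq0 x : (nm x == 0) = (x == 0).
Proof. by rewrite -(inj_eq (@complexI _)) -normE normr_eq0. Qed.

Lemma nm_norm1 x : `|x| = 1 -> nm x = 1.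
Proof. by rewrite normE => /complexI. Qed.

Lemma norm_nm1 x : nm x = 1 -> `|x| = 1.
Proof. by rewrite normE => ->. Qed.

Lemma pos_C (e : C) : 0 < e -> exists er : R, 0 < er /\ e = ((er)%:C)%C.
Proof.
case: e => a b; rewrite ltcE /= => /andP [/eqP b0 a0].
by exists a; split => //; rewrite b0.
Qed.

Lemma cisD x y : cis (x + y) = cis x * cis y.
Proof.
rewrite /cis cosD sinD; apply/eqP; rewrite eq_complex /= eqxx /=.
by rewrite addrC.
Qed.

Lemma cisX x n : cis x ^+ n = cis (x *+ n).
Proof.
elim: n => [|n IH]; first by rewrite expr0 mulr0n /cis cos0 sin0.
by rewrite exprS IH mulrS cisD.
Qed.

Lemma cis2pi : cis (pi *+ 2) = 1.
Proof. by rewrite /cis cos2pi sin2pi. Qed.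

Lemma nm_cis x : nm (cis x) = 1.
Proof. by rewrite /nm /= cos2Dsin2 sqrtr1. Qed.

Lemma nm_cisB a b : nm (cis a - cis b) ^+ 2 = 2 - 2 * cos (a - b).
Proof.
rewrite /nm sqr_sqrtr; last by rewrite addr_ge0 ?sqr_ge0.
rewrite /= cosB.
have h1 := cos2Dsin2 a; have h2 := cos2Dsin2 b.
transitivity ((cos a ^+2 + sin a ^+2) + (cos b^+2 + sin b^+2) - 2 * (cos a * cos b + sin a * sin b)).
  ring.
rewrite h1 h2; ring.
Qed.

Lemma polar (l : C) : nm l = 1 -> exists phi, 0 <= phi /\ l = cis phi.
Proof.
case: l => a b; rewrite /nm /= => H.
have Hab : a ^+ 2 + b ^+ 2 = 1.
  by rewrite -(@sqr_sqrtr _ (a ^+ 2 + b ^+ 2)) ?H ?expr1n // addr_ge0 ?sqr_ge0.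
have ha : -1 <= a <= 1 by apply/andP; split; nra.
have ca : cos (acos a) = a by apply: acosK; rewrite in_itv /=.
have sa : sin (acos a) = `|b|.
  by rewrite sin_acos // -sqrtr_sqr; congr Num.sqrt; rewrite -Hab; ring.
have a0 := acos_ge0 ha; have api := acos_lepi ha.
have [b0|b0] := leP 0 b.
  exists (acos a); split => //.
  by rewrite /cis ca sa ger0_norm.
exists (pi *+ 2 - acos a); split.
  by rewrite subr_ge0 mulr2n; have := pi_ge0 R; lra.
rewrite /cis cosB sinB cos2pi sin2pi ca sa ltr0_norm //.
by apply/eqP; rewrite eq_complex /= !mul1r !mul0r addr0 sub0r opprK !eqxx.
Qed.

Lemma near_cis (eps : R) : 0 < eps ->
  exists d, 0 < d /\ forall a b, `|a - b| < d -> nm (cis a - cis b) < eps.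
Proof.
move=> e0.
have e2 : 0 < eps ^+ 2 / 2 by rewrite divr_gt0 // exprn_gt0.
have /cvgrPdist_lt /(_ _ e2) := @continuous_cos R 0.
move=> /nbhs_ballP [d d0 Hd]; exists d; split => // a b hab.
have := Hd (a - b); rewrite /ball /= sub0r normrN => /(_ hab).
rewrite cos0 => hc.
have h2 := nm_cisB a b.
have hn := nm_ge0 (cis a - cis b).
have : 1 - cos (a - b) <= `|1 - cos (a - b)| by apply: ler_norm.
move: hc; set c := cos (a - b); move=> hc hcn.
have : nm (cis a - cis b) ^+ 2 < eps ^+ 2.
  rewrite h2 -/c; have : 2 * (1 - c) < eps ^+ 2.
    have : `|1 - c| * 2 < eps ^+ 2 by rewrite -ltr_pdivlMr.
    move=> ?; lra.
  move=> ?; lra.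
move=> hsq; move: hsq; rewrite ltr_pXn2r // ?inE ?nm_ge0 // qualifE /=. exact: ltW.
Qed.

Lemma roots_near (l : C) (eps : R) : nm l = 1 -> 0 < eps ->
  exists k0, forall k, (k0 <= k)%N -> exists a b : C, a != b /\
    a ^+ (2 ^ k) = a /\ b ^+ (2 ^ k) = b /\ nm a = 1 /\ nm b = 1 /\
    nm (a - l) < eps /\ nm (b - l) < eps.
Proof.
move=> l1 e0; have [phi [phi0 ->]] := @polar l l1.
have [d [d0 Hd]] := @near_cis eps e0.
have pi0 := pi_gt0 R.
exists (Num.truncn (pi *+ 2 / d) + 3)%N => k Hk.
set n := (2 ^ k).-1.
have kn : (k <= n)%N by rewrite /n -ltnS prednK ?expn_gt0 // ltn_expl.
have n3 : (3 <= n)%N by apply: leq_trans kn; apply: leq_trans Hk; rewrite leq_addl.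
have nR0 : (0 : R) < n%:R by rewrite ltr0n; apply: leq_trans n3.
have hn : pi *+ 2 / d < n%:R.
  apply: lt_le_trans (truncnS_gt _) _; rewrite ler_nat.
  by apply: leq_trans kn; apply: leq_trans Hk; rewrite addnS ltnS leq_addr.
pose h := pi *+ 2 / (n%:R : R).
have h0 : 0 < h by rewrite divr_gt0 // mulrn_wgt0.
have hd : h < d.
  by rewrite /h ltr_pdivrMr // mulrC -ltr_pdivrMr.
have hpi : h < pi.
  rewrite /h ltr_pdivrMr //; have : (3:R) <= n%:R by rewrite ler_nat.
  rewrite mulr2n; nra.
have phih : 0 <= phi / h by rewrite divr_ge0 // ltW.
pose j := Num.truncn (phi / h).
have /andP [j1 j2] := truncn_itv phih.
have hj1 : h *+ j <= phi by rewrite -mulr_natr -ler_pdivlMl // mulrC.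
have hj2 : phi < h *+ j.+1 by rewrite -mulr_natr -ltr_pdivrMl // mulrC.
have hjS : h *+ j.+1 = h *+ j + h by rewrite mulrSr.
have w1 : cis h ^+ n = 1.
  rewrite cisX /h -[X in cis X]mulr_natr divfK ?cis2pi //; exact: lt0r_neq0.
have kN : (2 ^ k)%N = n.+1 by rewrite /n prednK ?expn_gt0.
have fix1 : forall m, (cis h ^+ m) ^+ (2 ^ k) = cis h ^+ m.
  by move=> m; rewrite kN exprS -exprM mulnC exprM w1 expr1n mulr1.
have nmX : forall m, nm (cis h ^+ m) = 1 by move=> m; rewrite cisX nm_cis.
exists (cis h ^+ j), (cis h ^+ j.+1); split; last first.
  split; first exact: fix1.
  split; first exact: fix1.
  split; first exact: nmX.
  split; first exact: nmX.
  split; rewrite cisX; apply: Hd; rewrite ltr_norml; apply/andP; split; lra.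
rewrite exprS; apply/negP => /eqP E.
have : cis h = 1.
  apply: (mulIf (_ : cis h ^+ j != 0)); last by rewrite mul1r -E.
  by rewrite -(nm_eq0) nmX oner_eq0.
move/(congr1 (@complex.Im R)); rewrite /= => sh.
have : 0 < sin h by apply: sin_gt0_pi; rewrite h0 hpi.
by rewrite sh ltxx.
Qed.
Local Notation i0 := (ord0 : 'I_2).
Local Notation i1 := (lift ord0 ord0 : 'I_2).

Lemma construct (M : 'M[C]_2) (a b : C) : exists P : 'M[C]_2,
  \tr P = a + b /\ \det P = a * b /\
  (forall i j, i != j -> P i j = M i j) /\
  nm (P i0 i0 - M i0 i0) ^+ 2 <=
    nm (a * b - \det M - M i0 i0 * (a + b - \tr M)) /\
  P i1 i1 - M i1 i1 = (a + b - \tr M) - (P i0 i0 - M i0 i0).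
Proof.
set s := a + b - \tr M; set q := a * b - \det M - M i0 i0 * s.
set p := M i1 i1 - M i0 i0 + s.
have [x1 [x2 [Hp Hq]]] := @roots2 R p q.
have [x [Hx Hxn]] : exists x, x ^+ 2 - p * x + q = 0 /\ nm x ^+ 2 <= nm q.
  have n1 := nm_ge0 x1; have n2 := nm_ge0 x2.
  case: (leP (nm x1) (nm x2)) => h; [exists x1 | exists x2]; split.
  - by rewrite -Hp -Hq; ring.
  - by rewrite -Hq nmM expr2 ler_wpM2l.
  - by rewrite -Hp -Hq; ring.
  - by rewrite -Hq nmM expr2 mulrC ler_wpM2r // ltW.
pose P := \matrix_(i, j) (M i j + (if i == j then (if i == i0 then x else s - x) else 0)).
exists P; split; last split; last split; last split.
- rewrite tr2 !mxE /= /s tr2; ring.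
- rewrite det2 !mxE /=.
  apply/eqP; rewrite -subr_eq0; apply/eqP.
  transitivity (-(x ^+ 2 - p * x + q)); last by rewrite Hx oppr0.
  by rewrite /p /q /s det2 tr2; ring.
- by move=> i j /negPf ij; rewrite !mxE ij addr0.
- by rewrite !mxE /= addrC addKr.
- rewrite !mxE /=; ring.
Qed.

Lemma nmN x : nm (- x) = nm x.
Proof. by apply: complexI; rewrite -!normE normrN. Qed.

Lemma nmB x y : nm (x - y) <= nm x + nm y.
Proof. by rewrite -(nmN y); apply: nmD. Qed.

Lemma two_pos (p q : R) : 0 < p -> 0 < q -> exists t, 0 < t /\ t <= p /\ t <= q.
Proof.
move=> p0 q0; case: (leP p q) => h; [exists p | exists q]; split => //; split => //.
exact: ltW.
Qed.

Lemma pick_ab (l u : C) (eta : R) : 0 < eta -> nm u = 1 -> (l = 0 \/ nm l = 1) ->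
  exists a b : C, exists k, (0 < k)%N /\ a != b /\ a ^+ (2 ^ k) = a /\
    b ^+ (2 ^ k) = b /\ nm a <= 1 /\ nm (a - l) < eta /\ nm (b - u) < eta.
Proof.
move=> e0 u1 [->|l1].
  have [k0 Hk0] := @roots_near u eta u1 e0.
  have [b1 [b2 [_ [Hb1 [_ [nb1 [_ [db1 _]]]]]]]] := Hk0 (maxn k0 1) (leq_maxl _ _).
  exists 0, b1, (maxn k0 1); split; first by rewrite leq_max orbT.
  split; first by rewrite eq_sym -nm_eq0 nb1 oner_eq0.
  split; first by rewrite expr0n expn_eq0.
  split => //; split; first by rewrite (_ : nm 0 = 0) ?ler01 //; apply/eqP; rewrite nm_eq0.
  by split => //; rewrite subr0 (_ : nm 0 = 0) //; apply/eqP; rewrite nm_eq0.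
have [k0 Hk0] := @roots_near l eta l1 e0.
have [k1 Hk1] := @roots_near u eta u1 e0.
set k := maxn (maxn k0 k1) 1.
have [a1 [a2 [_ [Ha1 [_ [na1 [_ [da1 _]]]]]]]] := Hk0 k (leq_trans (leq_maxl k0 k1) (leq_maxl _ _)).
have [b1 [b2 [b12 [Hb1 [Hb2 [_ [_ [db1 db2]]]]]]]] := Hk1 k (leq_trans (leq_maxr k0 k1) (leq_maxl _ _)).
exists a1, (if b1 == a1 then b2 else b1), k; split; first by rewrite leq_max orbT.
split.
  by have [E|E] := eqVneq b1 a1; [rewrite -E | rewrite eq_sym].
split => //; split; first by case: ifP.
split; first by rewrite na1.
by split => //; case: ifP.
Qed.

Lemma approx (M : 'M[C]_2) (l u : C) : l + u = \tr M -> l * u = \det M ->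
  nm u = 1 -> (l = 0 \/ nm l = 1) -> closure (periodic_pts R) M.
Proof.
move=> Ht Hd u1 hl B /nbhs_ballP [e e0 eB].
have [er [er0 Ee]] := @pos_C e e0; subst e.
set A := nm (M i0 i0).
have A0 : 0 <= A by apply: nm_ge0.
have [eta [eta0 [eta1 eta2]]] : exists t, 0 < t /\ t <= er / 4 /\ t <= er ^+ 2 / (8 * (1 + A)).
  apply: two_pos; first by rewrite divr_gt0.
  by rewrite divr_gt0 ?exprn_gt0 // mulr_gt0 //; lra.
have [a [b [k [k0 [ab [Ha [Hb [na [dal dbu]]]]]]]]] := @pick_ab l u eta eta0 u1 hl.
have [P [Pt [Pd [Poff [Px Py]]]]] := construct M a b.
exists P; split; first exact: (@per_of R P a b k k0 Pt Pd ab Ha Hb).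
apply: eB; split; first by rewrite ltcR.
set s := a + b - \tr M in Px Py; set x := P i0 i0 - M i0 i0 in Px Py.
set q := a * b - \det M - M i0 i0 * s in Px.
have Es : s = (a - l) + (b - u) by rewrite /s -Ht; ring.
have Eq : q = a * (b - u) + u * (a - l) - M i0 i0 * s by rewrite /q -Hd; ring.
have hs : nm s < eta + eta.
  by rewrite Es; apply: le_lt_trans (nmD _ _) _; apply: ltrD.
have n1 := nm_ge0 (b - u); have n2 := nm_ge0 (a - l); have n3 := nm_ge0 s.
have n4 := nm_ge0 a; have nx := nm_ge0 x.
have hq : nm q <= eta + eta + A * (eta + eta).
  rewrite Eq; apply: le_trans (nmB _ _) _; apply: lerD; last first.
    by rewrite nmM; apply: ler_wpM2l => //; apply: ltW.
  apply: le_trans (nmD _ _) _; rewrite !nmM u1 mul1r; apply: lerD; last exact: ltW.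
  nra.
have e8 : eta * (8 * (1 + A)) <= er ^+ 2 by rewrite -ler_pdivlMr //; lra.
have hx2 : nm x ^+ 2 <= (er / 2) ^+ 2.
  apply: le_trans Px _; apply: le_trans hq _.
  have -> : (er / 2) ^+ 2 = er ^+ 2 / 4 by rewrite expr_div_n; congr (_ / _); rewrite expr2; lra.
  rewrite ler_pdivlMr //; nra.
have hx : nm x <= er / 2.
  by move: hx2; rewrite ler_pXn2r // ?qualifE /= ?nm_ge0 // divr_ge0 // ltW.
move=> i j; rewrite -ball_normE /ball_ /= normE ltcR nmC.
have [->|ij] := eqVneq i j; last first.
  rewrite Poff // subrr (_ : nm 0 = 0) //; apply/eqP; rewrite nm_eq0 //.
case: (ord2P j) => ->; rewrite -/x; first by lra.
rewrite Py; apply: le_lt_trans (nmB _ _) _; lra.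
Qed.
End Trig.

Theorem proposition3p4 (R : realType) :
  closure (periodic_pts R) =
  [set (0 : 'M[R[i]^o]_2)] `|` Lambda0 R `|` Lambda1 R `|` Lambda2 R.
Proof.
rewrite RHS_Sp; apply/seteqP; split.
  have /closure_id E := Sp_closed R.
  rewrite [X in _ `<=` X]E; apply: closureS; exact: per_Sp.
move=> M HM.
have [->|M0] := eqVneq M 0.
  apply: subset_closure; exists 1%N; split => //=.
  by rewrite /Phi_Id expr0n.
have [l [u [Ht Hd]]] := roots2 R (\tr M) (\det M).
case: HM => [[/eqP M0'|[d0 t1]]|[d1 heq]].
- by rewrite M0' in M0.
- move: d0; rewrite -Hd => /eqP; rewrite mulf_eq0 => /orP [/eqP l0|/eqP u0].
    apply: (@approx R M l u Ht Hd) => //; last by left.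
    by apply: nm_norm1; rewrite -t1 -Ht l0 add0r.
  apply: (@approx R M u l); rewrite ?(addrC u) ?(mulrC u) //; last by left.
  by apply: nm_norm1; rewrite -t1 -Ht u0 addr0.
- have e1 : nm R l * nm R u = 1.
    apply: complexI; rewrite rmorphM /= -!normE -normrM Hd d1 //.
  have e2 : 2 * nm R l ^+ 2 + 2 * nm R u ^+ 2 = 4.
    have E : 2 * `|l| ^+ 2 + 2 * `|u| ^+ 2 = 4 :> R[i]^o.
      rewrite -parallelogram Ht -heq -normrX; congr (_ + _).
      by rewrite -Ht -Hd -normrX; congr (Num.norm _); ring.
    apply: complexI; rewrite rmorphD !rmorphM /= -!normE -!expr2 !rmorph_nat.
    exact: E.
  have nl := nm_ge0 R l; have nu := nm_ge0 R u.
  have el : nm R l = nm R u.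
    have : (nm R l - nm R u) ^+ 2 = 0 by nra.
    by move/eqP; rewrite expf_eq0 /= subr_eq0 => /eqP.
  have u1 : nm R u = 1.
    have : (nm R u - 1) * (nm R u + 1) = 0 by nra.
    move/eqP; rewrite mulf_eq0 => /orP [/eqP|/eqP]; first by move/subr0_eq.
    by move=> h; lra.
  apply: (@approx R M l u Ht Hd) => //; right; by rewrite el.
Qed.
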